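(* Let $G$ be a connected $d$-regular simple graph of order $n$, where $d\ge 3$, with adjacency eigenvalues $d=\lambda_1>\lambda_2\ge\cdots\ge\lambda_n$. Then \[ \mathscr{K}_e(G)=n(d-1)+\sum_{i=2}^{n}\frac{d}{d-\lambda_i}. \]
   Context: Kemeny's constant of an irreducible finite Markov chain with transition matrix $P$ whose eigenvalues (with multiplicity) are $1=\rho_1,\rho_2,\dots,\rho_N$ (with $1$ simple) is $\mathscr{K}(P)=\sum_{i=2}^{N}\frac{1}{1-\rho_i}$. The edge Kemeny's constant $\mathscr{K}_e(G)$ is Kemeny's constant of the simple random walk on the arcs of $G$: the states are the $2|E(G)|$ arcs $(u,v)$ with $\{u,v\}\in E(G)$, and from arc $(u,v)$ the walk moves to arc $(v,w)$ with probability $1/\deg(v)$ for each neighbor $w$ of $v$ (including $w=u$). *)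

(* Defs.v *)
From HB Require Import structures.
From mathcomp Require Import all_boot all_order all_algebra all_field.
Set Implicit Arguments. Unset Strict Implicit. Unset Printing Implicit Defensive.
Import Order.TTheory GRing.Theory Num.Theory.
Local Open Scope ring_scope.

Definition mx_of (S : finType) (f : S -> S -> algC) : 'M[algC]_#|S| :=
  \matrix_(i, j) f (enum_val i) (enum_val j).

Definition spectrum (m : nat) (A : 'M[algC]_m) : seq algC :=
  sval (closed_field_poly_normal (char_poly A)).

(* Kemeny's constant of a finite Markov chain with transition matrix P:
   sum over eigenvalues rho_2..rho_N (one copy of the eigenvalue 1 removed)
   of 1/(1 - rho_i). *)
Definition kemeny (S : finType) (P : S -> S -> algC) : algC :=
  \sum_(r <- rem 1 (spectrum (mx_of P))) (1 - r)^-1.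

Definition simple_graph (T : finType) (e : rel T) : Prop :=
  symmetric e /\ irreflexive e.

Definition deg (T : finType) (e : rel T) (v : T) : nat := #|[set w | e v w]|.

Definition regular (T : finType) (e : rel T) (d : nat) : Prop :=
  forall v, deg e v = d.

Definition connected_graph (T : finType) (e : rel T) : Prop :=
  forall u v, connect e u v.

Definition arc (T : finType) (e : rel T) : predArgType :=
  {p : T * T | e p.1 p.2}.

(* Simple random walk on arcs: from (u,v) go to (v,w) w.p. 1/deg v. *)
Definition arc_walk (T : finType) (e : rel T) (a b : arc e) : algC :=
  if (sval a).2 == (sval b).1 then ((deg e (sval a).2)%:R)^-1 else 0.

Definition edge_kemeny (T : finType) (e : rel T) : algC := kemeny (@arc_walk T e).

Definition adj (T : finType) (e : rel T) : 'M[algC]_#|T| :=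
  mx_of (fun u v => (e u v)%:R).

(* Main.v *)
Require Import Defs.
From mathcomp Require Import all_boot all_order all_algebra all_field.
Import GRing.Theory Num.Theory.
Local Open Scope ring_scope.

Section Gen.
Variable F : fieldType.

Lemma sylvester_cp N n (S : 'M[F]_(N, n)) (R : 'M[F]_(n, N)) :
  'X^n * char_poly (S *m R) = 'X^N * char_poly (R *m S).
Proof.
pose Sp := map_mx polyC S; pose Rp := map_mx polyC R.
have eSR : char_poly_mx (S *m R) = 'X%:M - Sp *m Rp.
  by rewrite /char_poly_mx map_mxM.
have eRS : char_poly_mx (R *m S) = 'X%:M - Rp *m Sp.
  by rewrite /char_poly_mx map_mxM.
pose M := block_mx ('X%:M : 'M_N) Sp Rp (1%:M : 'M_n).
have e1 : M = block_mx 1%:M Sp 0 1%:M *m block_mx ('X%:M - Sp *m Rp) 0 Rp 1%:M.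
  by rewrite mulmx_block ?mul1mx ?mul0mx ?mulmx0 ?mulmx1 ?add0r ?addr0 subrK.
have e2 : M *m block_mx 1%:M (- Sp) 0 ('X%:M) =
          block_mx ('X%:M) 0 Rp ('X%:M - Rp *m Sp).
  rewrite mulmx_block ?mulmx1 ?mulmx0 ?mul0mx ?addr0 ?add0r.
  by rewrite mul_scalar_mx mul_scalar_mx mul_mx_scalar scale1r mulmxN scalerN addNr addrC.
have := congr1 determinant e2.
rewrite det_mulmx det_ublock det_lblock !det_scalar e1 det_mulmx det_ublock det_lblock.
rewrite !det1 !expr1n !mul1r ?mulr1 /char_poly eSR eRS.
by rewrite mulrC => ->. 
Qed.
End Gen.
Lemma spec_prod m (A : 'M[algC]_m) :
  char_poly A = \prod_(z <- spectrum A) ('X - z%:P).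
Proof.
rewrite /spectrum; case: closed_field_poly_normal => s /= e.
by rewrite {1}e (monicP (char_poly_monic A)) scale1r.
Qed.

Lemma size_spectrum m (A : 'M[algC]_m) : size (spectrum A) = m.
Proof.
have := size_char_poly A; rewrite spec_prod size_prod_XsubC.
by case.
Qed.

Lemma prod_scale (c : algC) (s : seq algC) (f : algC -> {poly algC}) :
  \prod_(z <- s) (c%:P * f z) = c%:P ^+ size s * \prod_(z <- s) f z.
Proof.
elim: s => [|a s IH]; first by rewrite !big_nil mulr1.
by rewrite !big_cons IH exprS /= mulrACA.
Qed.

Lemma char_poly_scale m (c : algC) (A : 'M[algC]_m) : c != 0 ->
  char_poly (c^-1 *: A) = \prod_(z <- spectrum A) ('X - (c^-1 * z)%:P).
Proof.
move=> c0.
pose q : {poly algC} := c%:P * 'X.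
have eM : map_mx (comp_poly q) (char_poly_mx A) = c%:P *: char_poly_mx (c^-1 *: A).
  apply/matrixP => i j; rewrite !mxE.
  rewrite comp_polyB comp_polyC.
  case: (i == j); rewrite /= ?mulr1n ?mulr0n ?comp_polyX ?comp_poly0.
    by rewrite mulrBr -polyCM mulrA mulfV // mul1r.
  by rewrite !sub0r mulrN -polyCM mulrA mulfV // mul1r.
have := congr1 determinant eM.
rewrite det_map_mx detZ -/(char_poly (c^-1 *: A)) -/(char_poly A) spec_prod.
rewrite rmorph_prod.
have -> : \prod_(i <- spectrum A) comp_poly q ('X - i%:P) =
   \prod_(i <- spectrum A) (c%:P * ('X - (c^-1 * i)%:P)).
  apply: eq_bigr => z _; rewrite comp_polyB comp_polyX comp_polyC /q.
  by rewrite mulrBr -polyCM mulrA mulfV // mul1r.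
rewrite prod_scale size_spectrum => /mulfI -> //.
by rewrite expf_neq0 // polyC_eq0.
Qed.
Lemma sum_enum (S : finType) (F : S -> algC) :
  \sum_(k < #|S|) F (enum_val k) = \sum_(x : S) F x.
Proof. by rewrite (big_enum_val F). Qed.

Lemma card_arc (T : finType) (e : rel T) (d : nat) :
  regular e d -> #|Defs.arc e| = (#|T| * d)%N.
Proof.
move=> reg; rewrite card_sig -sum1_card.
rewrite (eq_bigl (fun p : T * T => true && e p.1 p.2)) //.
rewrite -(pair_big_dep predT (fun u w => e u w) (fun _ _ => 1%N)) /=.
rewrite -sum_nat_const; apply: eq_bigr => u _.
rewrite -(reg u) /deg -sum1_card; apply: eq_bigl => w.
by rewrite inE.
Qed.

Lemma sum_rem0 (s : seq algC) x (f : algC -> algC) : f x = 0 ->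
  \sum_(z <- rem x s) f z = \sum_(z <- s) f z.
Proof.
move=> fx; case: (boolP (x \in s)) => h; last by rewrite rem_id.
by rewrite [RHS](big_rem _ h) /= fx add0r.
Qed.

Lemma sum_nseq (k : nat) (a : algC) (f : algC -> algC) :
  \sum_(z <- nseq k a) f z = f a *+ k.
Proof.
elim: k => [|k IH]; first by rewrite big_nil.
by rewrite /= big_cons IH mulrS.
Qed.

Lemma prod_nseq0 k : \prod_(z <- nseq k (0:algC)) ('X - z%:P) = 'X^k.
Proof.
elim: k => [|k IH]; first by rewrite big_nil expr0.
by rewrite /= big_cons IH subr0 exprS.
Qed.

Section Graph.
Variables (T : finType) (e : rel T) (d : nat).
Hypothesis reg : regular e d.
Hypothesis d0 : (0 < d)%N.
Local Notation A := (Defs.arc e).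
Local Notation c := (d%:R : algC).
Definition hd (a : A) : T := (sval a).2.
Definition tl (a : A) : T := (sval a).1.
Definition Sm : 'M[algC]_(#|A|, #|T|) :=
  \matrix_(i, j) (hd (enum_val i) == enum_val j)%:R.
Definition Rm : 'M[algC]_(#|T|, #|A|) :=
  \matrix_(i, j) (c^-1 * (tl (enum_val j) == enum_val i)%:R).

Lemma claim1 : mx_of (@arc_walk T e) = Sm *m Rm.
Proof.
apply/matrixP => i j; rewrite /Sm /Rm !mxE; under eq_bigr do rewrite !mxE.
rewrite (sum_enum _ (fun v => (hd (enum_val i) == v)%:R *
   (c^-1 * (tl (enum_val j) == v)%:R))).
rewrite (bigD1 (hd (enum_val i))) //= big1 => [|v hv]; last first.
  by rewrite eq_sym (negbTE hv) mul0r.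
rewrite eqxx mul1r addr0 /arc_walk reg -/(hd _) -/(tl _).
by rewrite eq_sym; case: eqP => _; rewrite ?mulr1 ?mulr0.
Qed.

Lemma claim2 : Rm *m Sm = c^-1 *: adj e.
Proof.
apply/matrixP => x y; rewrite /Sm /Rm !mxE; under eq_bigr do rewrite !mxE.
rewrite (sum_enum _ (fun a => (c^-1 * (tl a == enum_val x)%:R) *
   (hd a == enum_val y)%:R)).
under eq_bigr do rewrite -mulrA.
rewrite -mulr_sumr; congr (_ * _).
set u := enum_val x; set w := enum_val y.
case: (boolP (e u w)) => euw.
  pose a0 : A := exist _ (u, w) euw.
  rewrite (bigD1 a0) //= big1 => [|a ha].
    by rewrite /tl /hd /= !eqxx mulr1 addr0.
  case: eqP => [t|]; last by rewrite mul0r.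
  case: eqP => [h|]; last by rewrite mulr0.
  case/eqP: ha; apply: val_inj; rewrite /= -t -h /tl /hd.
  by case: (sval a).
rewrite big1 // => a _.
case: eqP => [t|]; last by rewrite mul0r.
case: eqP => [h|]; last by rewrite mulr0.
by have := svalP a; rewrite /tl /hd in t h; rewrite t h (negbTE euw).
Qed.
End Graph.
Theorem lemma3p1 (T : finType) (e : rel T) (d : nat) :
  simple_graph e -> connected_graph e -> regular e d -> (3 <= d)%N ->
  edge_kemeny e =
    (#|T| * (d - 1))%:R
    + \sum_(l <- rem (d%:R : algC) (spectrum (adj e))) d%:R / (d%:R - l).
Proof.
move=> _ _ reg d3.
have d0 : (0 < d)%N by apply: leq_trans d3.
have c0 : (d%:R : algC) != 0 by rewrite pnatr_eq0 -lt0n.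
set c : algC := d%:R.
have H := sylvester_cp _ _ _ (Sm T e) (Rm T e d).
rewrite -claim1 // claim2 char_poly_scale // !spec_prod in H.
rewrite -!prod_nseq0 -!big_cat /= in H.
have hm : \prod_(z <- spectrum (adj e)) ('X - ((d%:R : algC)^-1 * z)%:P) =
  \prod_(z <- map (fun z => (d%:R : algC)^-1 * z) (spectrum (adj e))) ('X - z%:P).
  by rewrite big_map.
rewrite hm -big_cat in H.
have hp := prod_XsubC_eq H.
pose g (r : algC) := (1 - r)^-1.
have hs := perm_big (op := +%R) (x := 0 : algC) (P := predT) (F := g) _ hp.
rewrite !big_cat /= !sum_nseq big_map in hs.
rewrite /edge_kemeny /kemeny sum_rem0; last by rewrite subrr invr0.
rewrite sum_rem0; last by rewrite subrr invr0 mulr0.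
rewrite [X in _ = _ *+ X + _](card_arc _ _ _ reg) in hs.
have en : (#|T| * d = #|T| + #|T| * (d - 1))%N.
  by rewrite -{2}(muln1 #|T|) -mulnDr subnKC.
rewrite en /g subr0 invr1 mulrnDr -addrA in hs.
move/addrI: hs => ->.
congr (_ + _); apply: eq_bigr => l _.
have -> : 1 - c^-1 * l = (c - l) / c by rewrite mulrBl divff // mulrC.
by rewrite invf_div.
Qed.
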